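(* Let $\alpha$ be a unit speed Frenet curve in $\mathbb{E}^3$ with curvature $\kappa>0$ and torsion $\tau$, and let $\beta$ be an osculating mate of $\alpha$ with curvature $\bar\kappa$ and torsion $\bar\tau$. Then $$\kappa=\frac{\varepsilon_1\bar\kappa^2}{\bar\kappa^2+\bar\tau^2}\left(\frac{\bar\tau}{\bar\kappa}\right)',\qquad \tau=\pm\sqrt{\bar\kappa^2+\bar\tau^2}.$$
   Context: $\alpha:I\to\mathbb{E}^3$ is parametrized by arclength $s$, with Frenet frame $\{T,N,B\}$, $T'=\kappa N$, $N'=-\kappa T+\tau B$, $B'=-\tau N$. An osculating mate of $\alpha$ is a curve $\beta(s)=\int(x_1T+x_2N)ds$ with smooth $x_1,x_2$, $x_1^2+x_2^2=1$ and $\beta''\perp\mathrm{span}\{T,N\}$; $\beta$ is assumed to be a Frenet curve (nonvanishing curvature), unit speed in $s$, with Frenet apparatus $\{\bar T,\bar N,\bar B,\bar\kappa,\bar\tau\}$. Then $\beta'=\sin\theta\,T+\cos\theta\,N$ for an antiderivative $\theta=\int\kappa ds$ of $\kappa$, and $\varepsilon_1\in\{\pm1\}$ denotes the sign with $\varepsilon_1\tau\cos\theta>0$. The prime denotes $d/ds$. *)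

(* Defs.v *)
From Stdlib Require Import Reals.
From Coquelicot Require Import Coquelicot.
Open Scope R_scope.

Record vec3 := mkV { vx : R; vy : R; vz : R }.

Definition vadd (u v : vec3) : vec3 := mkV (vx u + vx v) (vy u + vy v) (vz u + vz v).
Definition vscal (a : R) (v : vec3) : vec3 := mkV (a * vx v) (a * vy v) (a * vz v).
Definition dot (u v : vec3) : R := vx u * vx v + vy u * vy v + vz u * vz v.
Definition cross (u v : vec3) : vec3 :=
  mkV (vy u * vz v - vz u * vy v) (vz u * vx v - vx u * vz v) (vx u * vy v - vy u * vx v).

Definition has_vderiv (f : R -> vec3) (s : R) (v : vec3) : Prop :=
  is_derive (fun t => vx (f t)) s (vx v) /\
  is_derive (fun t => vy (f t)) s (vy v) /\
  is_derive (fun t => vz (f t)) s (vz v).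

Definition is_open_interval (I : R -> Prop) : Prop :=
  (exists s, I s) /\
  (forall x, I x -> exists e, 0 < e /\ forall y, Rabs (y - x) < e -> I y) /\
  (forall x y z, I x -> I z -> x <= y -> y <= z -> I y).

Definition smooth_on (I : R -> Prop) (f : R -> R) : Prop :=
  forall n s, I s -> ex_derive_n f n s.

Definition pos_orthonormal (T N B : vec3) : Prop :=
  dot T T = 1 /\ dot N N = 1 /\ dot B B = 1 /\
  dot T N = 0 /\ dot T B = 0 /\ dot N B = 0 /\ B = cross T N.

Definition frenet_curve (I : R -> Prop) (c T N B : R -> vec3) (k t : R -> R) : Prop :=
  smooth_on I k /\ smooth_on I t /\
  forall s, I s ->
    has_vderiv c s (T s) /\
    has_vderiv T s (vscal (k s) (N s)) /\
    has_vderiv N s (vadd (vscal (- k s) (T s)) (vscal (t s) (B s))) /\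
    has_vderiv B s (vscal (- t s) (N s)) /\
    pos_orthonormal (T s) (N s) (B s) /\
    0 < k s.

(* Main.v *)
Require Import Defs.
From Stdlib Require Import Reals Lra Psatz.
From Coquelicot Require Import Coquelicot.
Open Scope R_scope.
Lemma dunique (f : R -> R) x l1 l2 : is_derive f x l1 -> is_derive f x l2 -> l1 = l2.
Proof. intros H1 H2. apply is_derive_unique in H1. apply is_derive_unique in H2. congruence. Qed.
Lemma dmul (f g : R -> R) x df dg : is_derive f x df -> is_derive g x dg ->
  is_derive (fun t => f t * g t) x (df * g x + f x * dg).
Proof. intros. apply (is_derive_mult f g x df dg); auto. intros; apply Rmult_comm. Qed.
Lemma dplus (f g : R -> R) x df dg : is_derive f x df -> is_derive g x dg ->
  is_derive (fun t => f t + g t) x (df + dg).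
Proof. intros. apply (is_derive_plus f g x df dg); auto. Qed.
Lemma dsin (a : R -> R) x da : is_derive a x da -> is_derive (fun t => sin (a t)) x (cos (a x) * da).
Proof. intros H. auto_derive. exists da; auto. replace (Derive _ x) with da; [ring|symmetry; apply is_derive_unique; exact H]. Qed.
Lemma dcos (a : R -> R) x da : is_derive a x da -> is_derive (fun t => cos (a t)) x (- sin (a x) * da).
Proof. intros H. auto_derive. exists da; auto. replace (Derive _ x) with da; [ring|symmetry; apply is_derive_unique; exact H]. Qed.
Lemma excd (t th k : R -> R) x : ex_derive t x -> ex_derive th x -> ex_derive k x -> k x <> 0 ->
  ex_derive (fun u => t u * cos (th u) / k u) x.
Proof. intros. auto_derive. tauto. Qed.
Lemma ext_I (I : R -> Prop) (f g : R -> R) x l : is_open_interval I -> I x ->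
  (forall y, I y -> f y = g y) -> is_derive f x l -> is_derive g x l.
Proof.
  intros [_ [HO _]] Hx Hfg Hd. apply (is_derive_ext_loc f g x l); auto.
  destruct (HO x Hx) as [e [He Hy]]. exists (mkposreal e He). intros y Hb. apply Hfg, Hy. exact Hb.
Qed.
Lemma dcomb (th a b : R -> R) x k da db : is_derive th x k -> is_derive a x da -> is_derive b x db ->
  is_derive (fun t => sin (th t) * a t + cos (th t) * b t) x
   (cos (th x) * k * a x + sin (th x) * da + (- sin (th x) * k * b x + cos (th x) * db)).
Proof. intros H1 H2 H3.
  assert (A := dmul (fun t => sin (th t)) a x _ _ (dsin th x k H1) H2).
  assert (C := dmul (fun t => cos (th t)) b x _ _ (dcos th x k H1) H3).
  assert (D := dplus _ _ x _ _ A C). simpl in D. exact D. Qed.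

Lemma alg e t k co si : e*e = 1 -> si*si+co*co = 1 -> t<>0 -> co<>0 ->
  k = e * (e*(t*co))^2/((e*(t*co))^2 + (t*si)^2) * (0 * (si/co) + e * ((co*k*co - si*(-si*k))/co^2)).
Proof.
  intros He Hsc Ht Hco.
  assert (D : (e*(t*co))^2 + (t*si)^2 = t^2).
  { transitivity (t^2*((e*e)*(co*co) + si*si)); [ring|]. rewrite He. rewrite Rmult_1_l, Rplus_comm, Hsc. ring. }
  assert (Nm : co*k*co - si*(-si*k) = k).
  { transitivity (k*(si*si+co*co)); [ring|]. rewrite Hsc; ring. }
  rewrite D, Nm. transitivity ((e*e)*(e*e)*k); [rewrite He; ring | field; auto].
Qed.

Theorem theorem4
  (I : R -> Prop)
  (alpha T N B : R -> vec3) (kappa tau : R -> R)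
  (beta : R -> vec3) (x1 x2 : R -> R)
  (Tb Nb Bb : R -> vec3) (kb tb : R -> R)
  (theta : R -> R) :
  is_open_interval I ->
  frenet_curve I alpha T N B kappa tau ->
  smooth_on I x1 -> smooth_on I x2 ->
  (forall s, I s -> x1 s ^ 2 + x2 s ^ 2 = 1) ->
  (forall s, I s -> has_vderiv beta s (vadd (vscal (x1 s) (T s)) (vscal (x2 s) (N s)))) ->
  (forall s, I s -> exists v,
      has_vderiv (fun u => vadd (vscal (x1 u) (T u)) (vscal (x2 u) (N u))) s v /\
      dot v (T s) = 0 /\ dot v (N s) = 0) ->
  frenet_curve I beta Tb Nb Bb kb tb ->
  (forall s, I s -> is_derive theta s (kappa s)) ->
  (forall s, I s ->
      has_vderiv beta s (vadd (vscal (sin (theta s)) (T s)) (vscal (cos (theta s)) (N s)))) ->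
  forall s (eps1 : R), I s ->
    (eps1 = 1 \/ eps1 = -1) -> 0 < eps1 * tau s * cos (theta s) ->
    kappa s = eps1 * kb s ^ 2 / (kb s ^ 2 + tb s ^ 2) * Derive (fun u => tb u / kb u) s /\
    (tau s = sqrt (kb s ^ 2 + tb s ^ 2) \/ tau s = - sqrt (kb s ^ 2 + tb s ^ 2)).
Proof.
  intros HI [Hks [Hts Hal]] Hx1 Hx2 Hxx Hbx Hosc [Hkbs [Htbs Hbe]] Hth Hbth s eps1 Hs Heps Hpos.
  assert (HTb : forall u, I u -> vx (Tb u) = sin (theta u) * vx (T u) + cos (theta u) * vx (N u)
     /\ vy (Tb u) = sin (theta u) * vy (T u) + cos (theta u) * vy (N u)
     /\ vz (Tb u) = sin (theta u) * vz (T u) + cos (theta u) * vz (N u)).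
  { intros u Hu. destruct (Hbe u Hu) as [[d1 [d2 d3]] _]. destruct (Hbth u Hu) as [e1 [e2 e3]].
    simpl in e1, e2, e3. repeat split; eapply dunique; eauto. }
  assert (HkN : forall u, I u -> kb u * vx (Nb u) = tau u * cos (theta u) * vx (B u)
     /\ kb u * vy (Nb u) = tau u * cos (theta u) * vy (B u)
     /\ kb u * vz (Nb u) = tau u * cos (theta u) * vz (B u)).
  { intros u Hu. destruct (Hal u Hu) as [_ [[t1 [t2 t3]] [[n1 [n2 n3]] _]]].
    destruct (Hbe u Hu) as [_ [[f1 [f2 f3]] _]]. simpl in *.
    pose proof (Hth u Hu) as Hthu.
    repeat split.
    - assert (D := ext_I I _ (fun t => vx (Tb t)) u _ HI Hu (fun y Hy => eq_sym (proj1 (HTb y Hy))) (dcomb _ _ _ u _ _ _ Hthu t1 n1)).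
      rewrite (dunique _ _ _ _ f1 D). ring.
    - assert (D := ext_I I _ (fun t => vy (Tb t)) u _ HI Hu (fun y Hy => eq_sym (proj1 (proj2 (HTb y Hy)))) (dcomb _ _ _ u _ _ _ Hthu t2 n2)).
      rewrite (dunique _ _ _ _ f2 D). ring.
    - assert (D := ext_I I _ (fun t => vz (Tb t)) u _ HI Hu (fun y Hy => eq_sym (proj2 (proj2 (HTb y Hy)))) (dcomb _ _ _ u _ _ _ Hthu t3 n3)).
      rewrite (dunique _ _ _ _ f3 D). ring. }
  remember (fun u => tau u * cos (theta u) / kb u) as c eqn:Hcdef.
  assert (Hcv : forall u, I u -> c u = tau u * cos (theta u) / kb u) by (intros; subst; reflexivity).
  assert (Hkbp : forall u, I u -> 0 < kb u) by (intros u Hu; apply (Hbe u Hu)).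
  assert (HNb : forall u, I u -> vx (Nb u) = c u * vx (B u) /\ vy (Nb u) = c u * vy (B u)
      /\ vz (Nb u) = c u * vz (B u)).
  { intros u Hu. pose proof (Hkbp u Hu). rewrite (Hcv u Hu). destruct (HkN u Hu) as [a1 [a2 a3]].
    repeat split; apply (Rmult_eq_reg_l (kb u)); try lra.
    rewrite a1; field; lra. rewrite a2; field; lra. rewrite a3; field; lra. }
  assert (Hc2 : forall u, I u -> c u ^ 2 = 1).
  { intros u Hu. destruct (Hbe u Hu) as [_ [_ [_ [_ [[_ [HNN _]] _]]]]].
    destruct (Hal u Hu) as [_ [_ [_ [_ [[_ [_ [HBB _]]] _]]]]].
    destruct (HNb u Hu) as [a1 [a2 a3]].
    assert (E : c u ^ 2 * dot (B u) (B u) = dot (Nb u) (Nb u)) by (unfold dot; rewrite a1, a2, a3; ring).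
    rewrite HBB, HNN in E. lra. }
  assert (Hcd : forall u, I u -> ex_derive c u).
  { intros u Hu. rewrite Hcdef. apply excd. exact (Hts 1%nat u Hu). exists (kappa u); apply Hth; auto.
    exact (Hkbs 1%nat u Hu). pose proof (Hkbp u Hu); lra. }
  assert (Htb : forall u, I u -> tb u = tau u * sin (theta u)).
  { intros u Hu. destruct (Hal u Hu) as [_ [_ [_ [[b1 [b2 b3]] [[HTT [HNN [HBB [HTN [HTB [HNB HBx]]]]]] _]]]]].
    destruct (Hbe u Hu) as [_ [_ [[f1 [f2 f3]] [_ [[_ [_ [HbBB [_ [HbTB [_ HbBx]]]]]] _]]]]].
    simpl in b1, b2, b3, f1, f2, f3.
    pose proof (Derive_correct _ _ (Hcd u Hu)) as Dc.
    destruct (HNb u Hu) as [a1 [a2 a3]]. destruct (HTb u Hu) as [g1 [g2 g3]].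
    assert (E1 := dunique _ _ _ _ f1 (ext_I I _ (fun t => vx (Nb t)) u _ HI Hu (fun y Hy => eq_sym (proj1 (HNb y Hy))) (dmul _ _ u _ _ Dc b1))).
    assert (E2 := dunique _ _ _ _ f2 (ext_I I _ (fun t => vy (Nb t)) u _ HI Hu (fun y Hy => eq_sym (proj1 (proj2 (HNb y Hy)))) (dmul _ _ u _ _ Dc b2))).
    assert (E3 := dunique _ _ _ _ f3 (ext_I I _ (fun t => vz (Nb t)) u _ HI Hu (fun y Hy => eq_sym (proj2 (proj2 (HNb y Hy)))) (dmul _ _ u _ _ Dc b3))).
    assert (K : tb u * dot (Bb u) (Bb u) - kb u * dot (Tb u) (Bb u) =
       vx (Bb u) * (- kb u * vx (Tb u) + tb u * vx (Bb u)) +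
       vy (Bb u) * (- kb u * vy (Tb u) + tb u * vy (Bb u)) +
       vz (Bb u) * (- kb u * vz (Tb u) + tb u * vz (Bb u))) by (unfold dot; ring).
    rewrite E1, E2, E3, HbBB, HbTB in K.
    rewrite HbBx in K. simpl in K. rewrite g1, g2, g3, a1, a2, a3 in K.
    rewrite HBx in K. simpl in K.
    assert (L : tb u = c u ^ 2 * tau u * sin (theta u) * (dot (N u) (N u) * dot (T u) (T u) - dot (T u) (N u) ^ 2)).
    { transitivity (tb u * 1 - kb u * 0); [ring | rewrite K; unfold dot; ring]. }
    rewrite L, HNN, HTT, HTN, (Hc2 u Hu). ring. }
  assert (Hkb : forall u, I u -> kb u = c u * (tau u * cos (theta u))).
  { intros u Hu. pose proof (Hkbp u Hu).
    assert (E : tau u * cos (theta u) = c u * kb u) by (rewrite (Hcv u Hu); field; lra).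
    rewrite E. transitivity (c u ^ 2 * kb u); [rewrite (Hc2 u Hu); ring | ring]. }
  assert (Hnz : forall u, I u -> tau u <> 0 /\ cos (theta u) <> 0 /\ c u <> 0).
  { intros u Hu. pose proof (Hkbp u Hu). pose proof (Hkb u Hu). pose proof (Hc2 u Hu).
    repeat split; intro Z; rewrite Z in *; lra. }
  pose proof (Derive_correct _ _ (Hcd s Hs)) as Dc.
  assert (Hc0 : Derive c s = 0).
  { assert (Hcc : forall y, I y -> c y * c y = 1) by (intros y Hy; rewrite <- (Hc2 y Hy); ring).
    assert (D := dmul c c s _ _ Dc Dc).
    assert (D' := ext_I I _ (fun _ => 1) s _ HI Hs Hcc D).
    assert (Z := dunique _ _ _ _ D' (is_derive_const 1 s)).
    assert (Z' : Derive c s * c s + c s * Derive c s = 0) by exact Z.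
    destruct (Hnz s Hs) as [_ [_ Hc]].
    apply (Rmult_eq_reg_l (2 * c s)). rewrite Rmult_0_r. rewrite <- Z'. ring. lra. }
  assert (Hcs : c s = eps1).
  { pose proof (Hc2 s Hs) as C2. pose proof (Hkb s Hs) as Kb. pose proof (Hkbp s Hs).
    assert (Z : (c s - 1) * (c s + 1) = 0) by (rewrite <- (Rminus_diag_eq _ _ C2); ring).
    apply Rmult_integral in Z. destruct Z as [Z|Z]; [assert (c s = 1) by lra | assert (c s = -1) by lra];
      rewrite H0 in Kb; destruct Heps; subst eps1; lra. }
  destruct (Hnz s Hs) as [Hts0 [Hco Hc0']].
  assert (Dg := dmul c (fun t => sin (theta t) / cos (theta t)) s _ _ Dc
     (is_derive_div _ _ s _ _ (dsin theta s _ (Hth s Hs)) (dcos theta s _ (Hth s Hs)) Hco)).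
  assert (Heq : forall y, I y -> c y * (sin (theta y) / cos (theta y)) = tb y / kb y).
  { intros y Hy. destruct (Hnz y Hy) as [A1 [A2 A3]]. rewrite (Htb y Hy), (Hkb y Hy).
    replace (c y * (sin (theta y) / cos (theta y))) with
      (c y ^ 2 * (tau y * sin (theta y)) / (c y * (tau y * cos (theta y)))) by (field; auto).
    rewrite (Hc2 y Hy). field. auto. }
  simpl in Dg.
  assert (Dg' := ext_I I _ (fun u => tb u / kb u) s _ HI Hs Heq Dg). rewrite (is_derive_unique _ _ _ Dg').
  rewrite (Htb s Hs), (Hkb s Hs), Hcs, Hc0.
  pose proof (sin2_cos2 (theta s)) as SC. unfold Rsqr in SC.
  assert (E2 : eps1 * eps1 = 1) by (destruct Heps; subst; ring).
  split. apply alg; auto.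
  assert (D : (eps1*(tau s*cos (theta s)))^2 + (tau s*sin (theta s))^2 = tau s^2).
  { transitivity (tau s^2*((eps1*eps1)*(cos (theta s)*cos (theta s)) + sin (theta s)*sin (theta s))); [ring|].
    rewrite E2. rewrite Rmult_1_l, Rplus_comm, SC. ring. }
  rewrite D, <- Rsqr_pow2, sqrt_Rsqr_abs. unfold Rabs. destruct (Rcase_abs (tau s)); [right|left]; lra.
Qed.
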